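(* For every $k\ge1$, the set $G_k$ is a subgroup of $B_k$.
   Context: Let $C_2=\{e,\sigma\}$ with $\sigma=(1,2)$. Define $B_1=C_2$ and $B_k=B_{k-1}\wr C_2$ for $k>1$, with elements written as wreath recursions $(g_1,g_2)\pi$, $g_1,g_2\in B_{k-1}$, $\pi\in C_2$, and multiplication $(g_1,g_2)\pi\cdot(h_1,h_2)\rho=(g_1h_{\pi(1)},g_2h_{\pi(2)})\pi\rho$. Define $G_1=\{e\}$ and, for $k>1$, $G_k=\{(g_1,g_2)\pi\in B_k : g_1g_2\in G_{k-1}\}$. *)

(* Defs.v *)
From mathcomp Require Import all_boot.
Set Implicit Arguments. Unset Strict Implicit. Unset Printing Implicit Defensive.

(* C_2 = {e, sigma} is represented by bool: false = e, true = sigma = (1,2).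
   Bt n is the carrier of B_(n+1):
   B_1 = C_2, B_(k) = B_(k-1) wr C_2 with elements (g1, g2) pi. *)
Fixpoint Bt (n : nat) : Type :=
  match n with
  | 0 => bool
  | n'.+1 => (Bt n' * Bt n' * bool)%type
  end.

Definition B (k : nat) : Type := Bt k.-1.

Fixpoint Bone (n : nat) : Bt n :=
  match n return Bt n with
  | 0 => false
  | n'.+1 => (Bone n', Bone n', false)
  end.

(* Multiplication: (g1,g2)pi * (h1,h2)rho = (g1 h_{pi(1)}, g2 h_{pi(2)}) pi rho.
   For pi = sigma, pi(1) = 2 and pi(2) = 1. Product in C_2 is xor. *)
Fixpoint Bmul (n : nat) : Bt n -> Bt n -> Bt n :=
  match n return Bt n -> Bt n -> Bt n with
  | 0 => fun p r => addb p r
  | n'.+1 => fun g h =>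
      let: (g1, g2, p) := g in
      let: (h1, h2, r) := h in
      if p then (Bmul g1 h2, Bmul g2 h1, addb p r)
           else (Bmul g1 h1, Bmul g2 h2, addb p r)
  end.

(* Inverse: ((g1,g2)pi)^-1 = (g_{pi^-1(1)}^-1, g_{pi^-1(2)}^-1) pi^-1 *)
Fixpoint Binv (n : nat) : Bt n -> Bt n :=
  match n return Bt n -> Bt n with
  | 0 => fun p => p
  | n'.+1 => fun g =>
      let: (g1, g2, p) := g in
      if p then (Binv g2, Binv g1, p) else (Binv g1, Binv g2, p)
  end.

(* Gt n is the subset G_(n+1) of B_(n+1):
   G_1 = {e};  G_k = {(g1,g2)pi in B_k | g1 g2 in G_(k-1)}. *)
Fixpoint Gt (n : nat) : Bt n -> Prop :=
  match n return Bt n -> Prop with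
  | 0 => fun p => p = false
  | n'.+1 => fun g => let: (g1, g2, _) := g in Gt (Bmul g1 g2)
  end.

Definition G (k : nat) : B k -> Prop := @Gt k.-1.

Definition is_subgroup (n : nat) (S : Bt n -> Prop) : Prop :=
  [/\ S (Bone n),
      (forall x y, S x -> S y -> S (Bmul x y)) &
      (forall x, S x -> S (Binv x))].

(* Main.v *)
Require Import Defs.
From mathcomp Require Import all_boot.

Fixpoint phi (n : nat) : Bt n -> bool :=
  match n return Bt n -> bool with
  | 0 => fun p => p
  | n'.+1 => fun g => let: (g1, g2, _) := g in addb (@phi n' g1) (@phi n' g2)
  end.

Arguments phi {n}.

Lemma phi_mul n (x y : Bt n) : phi (Bmul x y) = addb (phi x) (phi y).
Proof.
elim: n x y => [|n IH] /=; first by [].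
move=> [[x1 x2] p] [[y1 y2] r]; case: p => /=; rewrite !IH;
  by case: (phi x1); case: (phi x2); case: (phi y1); case: (phi y2).
Qed.

Lemma phi_inv n (x : Bt n) : phi (Binv x) = phi x.
Proof.
elim: n x => [|n IH] /=; first by [].
move=> [[x1 x2] p]; case: p => /=; rewrite !IH //.
by case: (phi x1); case: (phi x2).
Qed.

Lemma phi_one n : phi (Bone n) = false.
Proof. by elim: n => [|n IH] //=; rewrite IH. Qed.


Lemma Gt_phi n (x : Bt n) : Gt x <-> phi x = false.
Proof.
elim: n x => [|n IH] /=; first by [].
move=> [[x1 x2] p]; by rewrite -phi_mul.
Qed.

Theorem mainTheorem10 : forall k : nat, (1 <= k)%N -> @is_subgroup k.-1 (@G k).
Proof.
move=> k _; rewrite /G; split.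
- by apply/Gt_phi; rewrite phi_one.
- by move=> x y /Gt_phi hx /Gt_phi hy; apply/Gt_phi; rewrite phi_mul hx hy.
- by move=> x /Gt_phi hx; apply/Gt_phi; rewrite phi_inv.
Qed.
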